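(* Let $G=(V,E)$ be a connected graph such that $(V,\mathcal{M}_{m^3_3}(G))$ is a convex geometry. Then $G$ is house-free, hole-free and domino-free.
   Context: All graphs are finite and simple. A path in $G$ is induced if it is an induced subgraph of $G$; its length is its number of edges. For vertices $u,v$, the $m^3$-interval $I_{m^3}[u,v]$ is the set of all vertices lying on some induced $u$–$v$ path of length at least $3$. A set $S\subseteq V$ is $m^3$-convex if $I_{m^3}[u,v]\subseteq S$ for all $u,v\in S$. For $U\subseteq V$ with $|U|\ge 2$, a minimal $U$-tree is a subgraph $T$ of $G$ containing $U$ such that $T$ is a tree and every vertex of $V(T)\setminus U$ is a cut-vertex of the subgraph of $G$ induced by $V(T)$; the monophonic interval $I_m(U)$ is the set of all vertices lying in some minimal $U$-tree. A set $S$ is $m_3$-convex if $I_m(U)\subseteq S$ for every $3$-element subset $U\subseteq S$. A set is $m^3_3$-convex if it is both $m^3$-convex and $m_3$-convex; $\mathcal{M}_{m^3_3}(G)$ denotes the family of $m^3_3$-convex sets. An alignment of a finite set $V$ is a family $\mathcal{M}$ of subsets of $V$ closed under intersection and containing $\emptyset$ and $V$; its members are called convex sets. The convex hull of $S\subseteq V$ is the smallest convex set containing $S$. For $X\in\mathcal{M}$, $x\in X$ is an extreme point of $X$ if $X\setminus\{x\}\in\mathcal{M}$. $(V,\mathcal{M})$ is a convex geometry if every convex set is the convex hull of its set of extreme points. A hole is an induced cycle of length at least $5$. The house is the graph obtained from a $4$-cycle $x_1x_2x_3x_4x_1$ by adding a vertex $y$ adjacent exactly to $x_1$ and $x_2$.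 The domino is the graph on six vertices consisting of a $6$-cycle $x_1x_2\dots x_6x_1$ together with the single chord $x_1x_4$. $G$ is $F$-free if it has no induced subgraph isomorphic to $F$ (hole-free: no induced cycle of length at least $5$). *)

(* Defs.v *)
(* Finite simple graphs: a symmetric irreflexive relation
   e : rel T on a finite type T (vertex set = all of T). *)
From mathcomp Require Import all_boot.
Set Implicit Arguments. Unset Strict Implicit. Unset Printing Implicit Defensive.

Section Graphs.
Variable T : finType.
Variable e : rel T.

(* u :: p is an induced path of G (vertices distinct; two vertices are
   adjacent iff consecutive). It is a path from u to (last u p) of length
   size p. *)
Definition ipath (u : T) (p : seq T) : Prop :=
  let q := u :: p in
  uniq q /\
  forall i j, i < size q -> j < size q ->
    e (nth u q i) (nth u q j) = ((i.+1 == j) || (j.+1 == i)).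

Definition in_m3I (u v x : T) : Prop :=
  exists p, ipath u p /\ last u p = v /\ 3 <= size p /\ x \in u :: p.

Definition m3_convex (S : {set T}) : Prop :=
  forall u v x, u \in S -> v \in S -> in_m3I u v x -> x \in S.

Definition restrict (W : {set T}) : rel T :=
  [rel x y | [&& e x y, x \in W & y \in W]].

(* w is a cut-vertex of G[W]: removing w disconnects two vertices that were
   connected in G[W] (i.e. the number of components increases). *)
Definition cut_vertex (W : {set T}) (w : T) : Prop :=
  w \in W /\
  exists a b, [/\ a \in W :\ w, b \in W :\ w,
                  connect (restrict W) a b & ~~ connect (restrict (W :\ w)) a b].

Definition is_tree (W : {set T}) (f : rel T) : Prop :=
  (forall a b, a \in W -> b \in W -> connect f a b) /\
  ~ (exists c : seq T, [/\ uniq c, 3 <= size c & cycle f c]).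

Definition minimal_Utree (U W : {set T}) (f : rel T) : Prop :=
  [/\ U \subset W,
      symmetric f,
      (forall x y, f x y -> [&& e x y, x \in W & y \in W]),
      is_tree W f &
      (forall w, w \in W -> w \notin U -> cut_vertex W w)].

Definition in_mI (U : {set T}) (x : T) : Prop :=
  exists W f, minimal_Utree U W f /\ x \in W.

Definition m_3_convex (S : {set T}) : Prop :=
  forall (U : {set T}) x, U \subset S -> #|U| = 3 -> in_mI U x -> x \in S.

Definition Mm33 (S : {set T}) : Prop := m3_convex S /\ m_3_convex S.

Definition contains_induced (n : nat) (F : rel 'I_n) : Prop :=
  exists g : 'I_n -> T, injective g /\ forall i j, e (g i) (g j) = F i j.

End Graphs.

Section ConvexGeometry.
Variable T : finType.
Variable M : {set T} -> Prop.

Definition is_hull (Y : T -> Prop) (X : {set T}) : Prop :=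
  [/\ M X, (forall x, Y x -> x \in X) &
      (forall C, M C -> (forall x, Y x -> x \in C) -> X \subset C)].

Definition extreme (X : {set T}) (x : T) : Prop := x \in X /\ M (X :\ x).

Definition alignment : Prop :=
  [/\ M set0, M setT & forall A B, M A -> M B -> M (A :&: B)].

Definition convex_geometry : Prop :=
  alignment /\ forall X, M X -> is_hull (extreme X) X.
End ConvexGeometry.

Definition cycle_rel (k : nat) : rel 'I_k :=
  fun i j => (i.+1 %% k == j) || (j.+1 %% k == i).

(* house: 4-cycle 0-1-2-3-0 (x1..x4) plus vertex 4 (y) adjacent to 0 and 1 *)
Definition house_edge (a b : nat) : bool :=
  [|| (a == 0) && (b == 1), (a == 1) && (b == 2), (a == 2) && (b == 3),
      (a == 3) && (b == 0), (a == 4) && (b == 0) | (a == 4) && (b == 1)].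
Definition house_rel : rel 'I_5 :=
  fun i j => house_edge i j || house_edge j i.

(* domino: 6-cycle 0-1-2-3-4-5-0 (x1..x6) plus chord 0-3 (x1x4) *)
Definition domino_rel : rel 'I_6 :=
  fun i j => [|| cycle_rel i j, (val i == 0) && (val j == 3) | (val i == 3) && (val j == 0)].

Definition house_free (T : finType) (e : rel T) : Prop := ~ contains_induced e house_rel.
Definition domino_free (T : finType) (e : rel T) : Prop := ~ contains_induced e domino_rel.
Definition hole_free (T : finType) (e : rel T) : Prop :=
  forall k, 5 <= k -> ~ contains_induced e (@cycle_rel k).

(* Main.v *)
Require Import Defs.
From mathcomp Require Import all_boot.
From Stdlib Require Import Classical.
From mathcomp Require Import zify.

Set Implicit Arguments. Unset Strict Implicit. Unset Printing Implicit Defensive.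

Lemma last_iota_S m n : last m (iota m.+1 n) = m + n.
Proof.
elim: n m => [|n IH] m /=; first by rewrite addn0.
by rewrite IH addSnnS.
Qed.

Section Abs.
Variable T : finType.
Variable M : {set T} -> Prop.

Lemma cg_contra (cg : convex_geometry M) (S1 S2 : {set T}) (y z : T) :
  M [set y] ->
  (forall C, M C -> S1 \subset C -> S2 \subset C) ->
  (forall C, M C -> S2 \subset C -> S1 \subset C) ->
  (forall x, x \in S1 -> x \in S2 -> x = y) ->
  z \in S1 -> z != y -> False.
Proof.
case: cg => [[M0 MT MI] hull] My H12 H21 Hy zS1 zy.
have [X [MX S1X minX]] : exists X, [/\ M X, S1 \subset X &
    forall C, M C -> S1 \subset C -> X \subset C].
  suff H : forall n (X : {set T}), #|X| <= n -> M X -> S1 \subset X -> exists X', [/\ M X', S1 \subset X' &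
    forall C, M C -> S1 \subset C -> X' \subset C].
    by apply: (H #|T| setT) => //; rewrite ?max_card ?subsetT.
  elim=> [|n IH] X cX MX S1X;
  (destruct (classic (forall C, M C -> S1 \subset C -> X \subset C)) as [h|h];
    [by exists X|]);
  (apply not_all_ex_not in h; case: h => C h;
   have [MC [S1C nXC]] : M C /\ S1 \subset C /\ ~ X \subset C by tauto);
  have lt : #|X :&: C| < #|X|
    by apply: proper_card; rewrite properEneq subsetIl andbT;
       apply/negP => /eqP E; apply: nXC; rewrite -E subsetIr.
  - by move: cX; rewrite leqn0 => /eqP E; rewrite E in lt.
  - apply: (IH (X :&: C)); first by rewrite -ltnS (leq_trans lt).
    + exact: MI.
    + by rewrite subsetI S1X S1C.
have S2X : S2 \subset X by exact: H12.
have minX2 : forall C, M C -> S2 \subset C -> X \subset C.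
  by move=> C MC S2C; apply: minX => //; apply: H21.
have extS : forall S : {set T}, S \subset X -> (forall C, M C -> S \subset C -> X \subset C) ->
   forall x, extreme M X x -> x \in S.
  move=> S SX HS x [xX Mx]; case: (boolP (x \in S)) => // xS.
  have : X \subset X :\ x.
    apply: HS => //; apply/subsetP => w wS; rewrite in_setD1 (subsetP SX) // andbT.
    by apply/eqP => E; rewrite -E wS in xS.
  by move/subsetP/(_ x xX); rewrite in_setD1 eqxx.
case: (hull X MX) => _ _ Hh.
have : X \subset [set y].
  apply: Hh => // x ex; rewrite in_set1; apply/eqP; apply: Hy.
  - exact: (extS S1 S1X minX).
  - exact: (extS S2 S2X minX2).
move/subsetP/(_ z (subsetP S1X z zS1)); rewrite in_set1 => /eqP E.
by rewrite E eqxx in zy.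
Qed.
End Abs.

Section G.
Variable T : finType.
Variable e : rel T.

Lemma ipath_of (f : nat -> T) L :
  (forall i j, i <= L -> j <= L -> f i = f j -> i = j) ->
  (forall i j, i <= L -> j <= L -> e (f i) (f j) = (i.+1 == j) || (j.+1 == i)) ->
  ipath e (f 0) [seq f i | i <- iota 1 L].
Proof.
move=> Hinj Hadj; rewrite /ipath.
have -> : f 0 :: [seq f i | i <- iota 1 L] = [seq f i | i <- iota 0 L.+1] by [].
split.
  rewrite map_inj_in_uniq ?iota_uniq // => i j; rewrite !mem_iota !add0n !ltnS => hi hj.
  exact: Hinj.
rewrite size_map size_iota => i j hi hj.
rewrite !(nth_map 0) ?size_iota // !nth_iota // !add0n.
by apply: Hadj; rewrite -ltnS.
Qed.

Lemma m3_from_f (X : {set T}) (f : nat -> T) L :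
  m3_convex e X -> 3 <= L ->
  (forall i j, i <= L -> j <= L -> f i = f j -> i = j) ->
  (forall i j, i <= L -> j <= L -> e (f i) (f j) = (i.+1 == j) || (j.+1 == i)) ->
  f 0 \in X -> f L \in X -> forall i, i <= L -> f i \in X.
Proof.
move=> HX L3 Hinj Hadj h0 hL i iL.
apply: (HX (f 0) (f L)) => //.
exists [seq f i | i <- iota 1 L]; split; first exact: ipath_of.
split; first by rewrite last_map last_iota_S.
split; first by rewrite size_map size_iota.
have -> : f 0 :: [seq f i | i <- iota 1 L] = [seq f i | i <- iota 0 L.+1] by [].
by apply: map_f; rewrite mem_iota.
Qed.

Lemma single_convex (y : T) : Mm33 e [set y].
Proof.
split.
  move=> u v x; rewrite !in_set1 => /eqP -> /eqP -> [p [[Hu _] [Hl [Hs _]]]].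
  case: p Hu Hl Hs => [|a p] //= Hu Hl _.
  exfalso; move: Hu => /= /andP [/negP H _]; by apply: H; rewrite -Hl mem_last.
move=> U x sU cU.
by have := subset_leq_card sU; rewrite cards1 cU.
Qed.

Lemma m3_from_list n (F : rel 'I_n) (g : 'I_n -> T) (X : {set T}) (l : seq 'I_n) x0 L :
  injective g -> (forall i j, e (g i) (g j) = F i j) ->
  size l = L.+1 -> uniq l ->
  all (fun i => all (fun j => F (nth x0 l i) (nth x0 l j) == (i.+1 == j) || (j.+1 == i))
     (iota 0 L.+1)) (iota 0 L.+1) ->
  m3_convex e X -> 3 <= L ->
  g (nth x0 l 0) \in X -> g (nth x0 l L) \in X ->
  forall i, i <= L -> g (nth x0 l i) \in X.
Proof.
move=> ginj ge sl ul ch HX L3 h0 hL.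
apply: (m3_from_f (f := fun i => g (nth x0 l i))) => //.
  move=> i j hi hj /ginj /eqP; rewrite nth_uniq ?sl ?ltnS // => /eqP //.
move=> i j hi hj; rewrite ge.
move/allP: ch => /(_ i); rewrite mem_iota ltnS hi => /(_ isT) /allP /(_ j).
by rewrite mem_iota ltnS hj => /(_ isT) /eqP.
Qed.
End G.

Section Hole.
Variable T : finType.
Variable e : rel T.
Variable k : nat.
Variable g : 'I_k.+1 -> T.
Hypothesis ginj : injective g.
Hypothesis ge : forall i j, e (g i) (g j) = cycle_rel i j.
Hypothesis k5 : 5 <= k.+1.

Let K := k.+1.
Definition hh (n : nat) : T := g (inord (n %% K)).

Lemma hh_eq n m : hh n = hh m -> n %% K = m %% K.
Proof.
move=> H; have := congr1 val (ginj H); rewrite /= !inordK ?ltn_mod //.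
Qed.

Lemma hh_mod n : hh (n %% K) = hh n.
Proof. by rewrite /hh modn_mod. Qed.

Lemma hh_adj n m : e (hh n) (hh m) = (n.+1 %% K == m %% K) || (m.+1 %% K == n %% K).
Proof.
have S a : (a %% K).+1 %% K = a.+1 %% K by rewrite -addn1 modnDml addn1.
by rewrite ge /cycle_rel !inordK ?ltn_mod // !S.
Qed.

Lemma hh_arc (X : {set T}) s L :
  m3_convex e X -> 3 <= L -> L <= K - 2 ->
  hh s \in X -> hh (s + L) \in X -> forall i, i <= L -> hh (s + i) \in X.
Proof.
move=> HX L3 LK h0 hL.
have LK' : L.+1 < K by move: LK k5; rewrite /K; lia.
apply: (m3_from_f (f := fun i => hh (s + i)) HX L3) => //; last by rewrite addn0.
  move=> i j hi hj /= H; have /eqP := hh_eq H; rewrite eqn_modDl !modn_small //.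
  - by move/eqP.
  - by move: hj LK'; lia.
  - by move: hi LK'; lia.
move=> i j hi hj; rewrite hh_adj -!addnS !eqn_modDl.
have hiK : i.+1 < K by move: hi LK'; lia.
have hjK : j.+1 < K by move: hj LK'; lia.
by rewrite !modn_small // ltnW.
Qed.

Lemma hole_contra (cg : convex_geometry (Mm33 e)) : False.
Proof.
have hK : forall n, hh (K + n) = hh n by move=> n; rewrite -hh_mod modnDl hh_mod.
have L3 : 3 <= K - 2 by move: k5; rewrite /K; lia.
have arc03 : forall X, Mm33 e X -> hh 0 \in X -> hh 3 \in X -> hh 1 \in X /\ hh 2 \in X.
  move=> X [HX _] a b; split.
  - exact: (hh_arc (s := 0) (L := 3) HX).
  - exact: (hh_arc (s := 0) (L := 3) HX).
have neq : forall a b, a < K -> b < K -> a != b -> hh a != hh b.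
  move=> a b aK bK ab; apply/eqP => /hh_eq; rewrite !modn_small // => E.
  by rewrite E eqxx in ab.
have K2 : 2 + (K - 2) = K by move: k5; rewrite /K; lia.
have K3 : 3 + (K - 2) = K + 1 by move: k5; rewrite /K; lia.
have K3' : 3 + (K - 3) = K + 0 by move: k5; rewrite /K; lia.
have K33 : K - 3 <= K - 2 by lia.
have lt1 : 1 < K by move: k5; rewrite /K; lia.
have lt2 : 2 < K by move: k5; rewrite /K; lia.
have lt3 : 3 < K by move: k5; rewrite /K; lia.
refine (@cg_contra _ _ cg [set hh 0; hh 2] [set hh 1; hh 3] (hh 0) (hh 2) _ _ _ _ _ _).
- exact: single_convex.
- move=> C MC /subsetP S; have a0 := S _ (set21 _ _); have a2 := S _ (set22 _ _).
  have a3 : hh 3 \in C.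
    case: MC => HX _.
    have hL : hh (2 + (K - 2)) \in C by rewrite K2 -(addn0 K) hK.
    have h1 : 1 <= K - 2 by move: L3; lia.
    by have := hh_arc HX L3 (leqnn _) a2 hL h1.
  by apply/subsetP => x; rewrite !inE => /orP [] /eqP ->; [case: (arc03 C MC a0 a3)|].
- move=> C MC /subsetP S; have a1 := S _ (set21 _ _); have a3 := S _ (set22 _ _).
  have a0 : hh 0 \in C.
    case: MC => HX _.
    rewrite -(hK 0) -K3'.
    have hL : hh (3 + (K - 2)) \in C by rewrite K3 hK.
    by have := hh_arc HX L3 (leqnn _) a3 hL K33.
  by apply/subsetP => x; rewrite !inE => /orP [] /eqP ->; [|case: (arc03 C MC a0 a3)].
- move=> x; rewrite !inE => /orP [] /eqP -> // /orP [] /eqP E; exfalso.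
  + by move: (neq 2 1 lt2 lt1 isT); rewrite E eqxx.
  + by move: (neq 2 3 lt2 lt3 isT); rewrite E eqxx.
- by rewrite !inE eqxx orbT.
- exact: (neq 2 0 lt2 (ltn0Sn _) isT).
Qed.
End Hole.

Lemma gneq (T : finType) n (g : 'I_n -> T) (a b : 'I_n) :
  injective g -> val a != val b -> g a != g b.
Proof. by move=> ginj; apply: contra => /eqP /ginj ->. Qed.

Definition oo (n i : nat) (H : i < n) : 'I_n := Ordinal H.

Section House.
Variable T : finType.
Variable e : rel T.
Variable g : 'I_5 -> T.
Hypothesis ginj : injective g.
Hypothesis ge : forall i j, e (g i) (g j) = house_rel i j.

Lemma house_contra (cg : convex_geometry (Mm33 e)) : False.
Proof.
pose o0 := @oo 5 0 isT. pose o1 := @oo 5 1 isT. pose o2 := @oo 5 2 isT.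
pose o3 := @oo 5 3 isT. pose o4 := @oo 5 4 isT.
refine (@cg_contra _ _ cg [set g o4; g o2] [set g o4; g o3] (g o4) (g o2) _ _ _ _ _ _).
- exact: single_convex.
- move=> C [HX _] /subsetP S; have a4 := S _ (set21 _ _); have a2 := S _ (set22 _ _).
  apply/subsetP => x; rewrite !inE => /orP [] /eqP -> //.
  exact: (@m3_from_list _ e _ house_rel g C [:: o4; o0; o3; o2] o0 3 ginj ge erefl isT isT HX isT a4 a2 2 isT).
- move=> C [HX _] /subsetP S; have a4 := S _ (set21 _ _); have a3 := S _ (set22 _ _).
  apply/subsetP => x; rewrite !inE => /orP [] /eqP -> //.
  exact: (@m3_from_list _ e _ house_rel g C [:: o4; o1; o2; o3] o0 3 ginj ge erefl isT isT HX isT a4 a3 2 isT).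
- move=> x; rewrite !inE => /orP [] /eqP -> // /orP [] /eqP E; exfalso.
  + by move: (@gneq _ _ g o2 o4 ginj isT); rewrite E eqxx.
  + by move: (@gneq _ _ g o2 o3 ginj isT); rewrite E eqxx.
- by rewrite !inE eqxx orbT.
- exact: (@gneq _ _ g o2 o4 ginj isT).
Qed.
End House.

Section Domino.
Variable T : finType.
Variable e : rel T.
Variable g : 'I_6 -> T.
Hypothesis ginj : injective g.
Hypothesis ge : forall i j, e (g i) (g j) = domino_rel i j.

Lemma domino_contra (cg : convex_geometry (Mm33 e)) : False.
Proof.
pose o0 := @oo 6 0 isT. pose o1 := @oo 6 1 isT. pose o2 := @oo 6 2 isT.
pose o3 := @oo 6 3 isT. pose o4 := @oo 6 4 isT. pose o5 := @oo 6 5 isT.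
refine (@cg_contra _ _ cg [set g o1; g o4] [set g o2; g o5] (g o1) (g o4) _ _ _ _ _ _).
- exact: single_convex.
- move=> C [HX _] /subsetP S; have a1 := S _ (set21 _ _); have a4 := S _ (set22 _ _).
  apply/subsetP => x; rewrite !inE => /orP [] /eqP ->.
  + exact: (@m3_from_list _ e _ domino_rel g C [:: o1; o2; o3; o4] o0 3 ginj ge erefl isT isT HX isT a1 a4 1 isT).
  + exact: (@m3_from_list _ e _ domino_rel g C [:: o1; o0; o5; o4] o0 3 ginj ge erefl isT isT HX isT a1 a4 2 isT).
- move=> C [HX _] /subsetP S; have a2 := S _ (set21 _ _); have a5 := S _ (set22 _ _).
  apply/subsetP => x; rewrite !inE => /orP [] /eqP ->.
  + exact: (@m3_from_list _ e _ domino_rel g C [:: o5; o0; o1; o2] o0 3 ginj ge erefl isT isT HX isT a5 a2 2 isT).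
  + exact: (@m3_from_list _ e _ domino_rel g C [:: o2; o3; o4; o5] o0 3 ginj ge erefl isT isT HX isT a2 a5 2 isT).
- move=> x; rewrite !inE => /orP [] /eqP -> // /orP [] /eqP E; exfalso.
  + by move: (@gneq _ _ g o4 o2 ginj isT); rewrite E eqxx.
  + by move: (@gneq _ _ g o4 o5 ginj isT); rewrite E eqxx.
- by rewrite !inE eqxx orbT.
- exact: (@gneq _ _ g o4 o1 ginj isT).
Qed.
End Domino.

Theorem mainTheorem4 (T : finType) (e : rel T)
  (e_sym : symmetric e) (e_irr : irreflexive e)
  (G_conn : forall x y : T, connect e x y)
  (cg : convex_geometry (Mm33 e)) :
  house_free e /\ hole_free e /\ domino_free e.
Proof.
split; [|split].
- by case=> g [ginj ge]; exact: (house_contra ginj ge cg).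
- case=> [|k] // k5 [g [ginj ge]]; exact: (hole_contra ginj ge k5 cg).
- by case=> g [ginj ge]; exact: (domino_contra ginj ge cg).
Qed.
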